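(* Let $U,V$ be finite-dimensional vector spaces over a field $\mathbb{K}$, let $\mathcal{S}$ be a linear subspace of $\mathcal{L}(U,V)$ with $\operatorname{codim}_{\mathcal{L}(U,V)}\mathcal{S}\leq 2\dim V-3$, and let $F:\mathcal{S}\to V$ be a range-compatible group homomorphism. Assume there are three linearly independent vectors $y_1,y_2,y_3\in V$ such that $F\bmod y_i$ is local for each $i\in\{1,2,3\}$. Then $F$ is local.
   Context: A map $F:\mathcal{S}\to V$ is range-compatible when $F(s)\in\operatorname{im}s$ for all $s\in\mathcal{S}$, and local when there is $x\in U$ with $F(s)=s(x)$ for all $s$. For nonzero $y\in V$, let $\pi:V\to V/\mathbb{K}y$ be the canonical projection; $\mathcal{S}\bmod y:=\{\pi\circ s: s\in\mathcal{S}\}\subset\mathcal{L}(U,V/\mathbb{K}y)$, and $F\bmod y:\mathcal{S}\bmod y\to V/\mathbb{K}y$ is the unique map with $(F\bmod y)(\pi\circ s)=\pi(F(s))$ for all $s\in\mathcal{S}$ (well defined and range-compatible since $F$ is). Thus $F\bmod y$ is local iff there is $x\in U$ with $F(s)-s(x)\in\mathbb{K}y$ for all $s\in\mathcal{S}$. *)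

(* Defs.v *)
From HB Require Import structures.
From mathcomp Require Import all_boot all_order all_algebra.
Set Implicit Arguments. Unset Strict Implicit. Unset Printing Implicit Defensive.
Import GRing.Theory.
Local Open Scope ring_scope.

(* F : S -> V is modelled as a total map 'Hom(U,V) -> V whose values are
   only constrained on S. *)

Definition additive_on (K : fieldType) (U V : vectType K)
  (S : {vspace 'Hom(U, V)}) (F : 'Hom(U, V) -> V) : Prop :=
  forall s t, s \in S -> t \in S -> F (s + t) = F s + F t.

Definition range_compatible (K : fieldType) (U V : vectType K)
  (S : {vspace 'Hom(U, V)}) (F : 'Hom(U, V) -> V) : Prop :=
  forall s, s \in S -> F s \in limg s.

Definition local_map (K : fieldType) (U V : vectType K)
  (S : {vspace 'Hom(U, V)}) (F : 'Hom(U, V) -> V) : Prop :=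
  exists x : U, forall s, s \in S -> F s = s x.

Definition local_mod (K : fieldType) (U V : vectType K)
  (S : {vspace 'Hom(U, V)}) (F : 'Hom(U, V) -> V) (y : V) : Prop :=
  exists x : U, forall s, s \in S -> F s - s x \in <[y]>%VS.

(* Main.v *)
Require Import Defs.
From HB Require Import structures.
From mathcomp Require Import all_boot all_order all_algebra.
From mathcomp Require Import zify.
Import GRing.Theory.
Local Open Scope ring_scope.

Section H.
Variables (K : fieldType) (U V : vectType K).

Lemma free3 (y1 y2 y3 : V) (a b c : K) : free [:: y1; y2; y3] ->
  a *: y1 + b *: y2 + c *: y3 = 0 -> [/\ a = 0, b = 0 & c = 0].
Proof.
move=> /(@freeP _ _ _ [tuple y1; y2; y3]) hf e.
have := hf (fun i : 'I_3 => nth 0 [:: a; b; c] i).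
rewrite !big_ord_recr big_ord0 /= add0r.
move=> /(_ e) h.
by split; [exact: (h (@Ordinal 3 0 isT)) | exact: (h (@Ordinal 3 1 isT)) | exact: (h (@Ordinal 3 2 isT))].
Qed.

Lemma free3' (y1 y2 y3 : V) (a b c a' b' c' : K) : free [:: y1; y2; y3] ->
  a *: y1 + b *: y2 + c *: y3 = a' *: y1 + b' *: y2 + c' *: y3 ->
  [/\ a = a', b = b' & c = c'].
Proof.
move=> hf e.
have : (a - a') *: y1 + (b - b') *: y2 + (c - c') *: y3 = 0.
  have id6 : forall A B C A' B' C' : V,
      (A - A') + (B - B') + (C - C') = (A + B + C) - (A' + B' + C').
    by move=> A B C A' B' C'; rewrite (addrACA A) -opprD addrACA -opprD.
  by rewrite !scalerBl id6 e subrr.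
by case/(@free3 _ _ _ _ _ _ hf) => /eqP; rewrite subr_eq0 => /eqP -> /eqP; rewrite subr_eq0 => /eqP ->
  /eqP; rewrite subr_eq0 => /eqP ->.
Qed.


Definition mkf (X : 2.-tuple U) (v1 v2 : V) (u : U) : V :=
  coord X (@Ordinal 2 0 isT) u *: v1 + coord X (@Ordinal 2 1 isT) u *: v2.

Fact mkf_lin X v1 v2 : linear (mkf X v1 v2).
Proof. move=> k u v; rewrite /mkf !linearP /=.
by rewrite !scalerDl !scalerA (mulrC _ k) addrACA. Qed.

HB.instance Definition _ X v1 v2 :=
  GRing.isSemilinear.Build K U V _ (mkf X v1 v2)
    (GRing.semilinear_linear (mkf_lin X v1 v2)).

Lemma mkf_z (z w : U) v1 v2 : free [:: z; w] -> mkf [tuple z; w] v1 v2 z = v1.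
Proof.
move=> hf; rewrite /mkf.
have h0 := @coord_free _ _ _ [tuple z; w] (@Ordinal 2 0 isT) (@Ordinal 2 0 isT) hf.
have h1 := @coord_free _ _ _ [tuple z; w] (@Ordinal 2 0 isT) (@Ordinal 2 1 isT) hf.
simpl in h0, h1; rewrite h0 h1 /=.
by rewrite scale1r scale0r addr0.
Qed.

Lemma mkf_w (z w : U) v1 v2 : free [:: z; w] -> mkf [tuple z; w] v1 v2 w = v2.
Proof.
move=> hf; rewrite /mkf.
have h0 := @coord_free _ _ _ [tuple z; w] (@Ordinal 2 1 isT) (@Ordinal 2 0 isT) hf.
have h1 := @coord_free _ _ _ [tuple z; w] (@Ordinal 2 1 isT) (@Ordinal 2 1 isT) hf.
simpl in h0, h1; rewrite h0 h1 /=.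
by rewrite scale1r scale0r add0r.
Qed.

Definition Phi (z w : U) (s : 'Hom(U, V)) : (V * V)%type := (s z, s w).

Fact Phi_lin z w : linear (Phi z w).
Proof. by move=> k s t; rewrite /Phi !add_lfunE !scale_lfunE. Qed.

HB.instance Definition _ z w :=
  GRing.isSemilinear.Build K 'Hom(U, V) (V * V)%type _ (Phi z w)
    (GRing.semilinear_linear (Phi_lin z w)).

End H.
Arguments free3 {K V y1 y2 y3 a b c}.
Arguments free3' {K V y1 y2 y3 a b c a' b' c'}.


Lemma arith (h s k c i l w v : nat) : (h - s + 3 <= 2 * v)%N -> (k + l = h)%N ->
  (c + i = s)%N -> (v + v <= l)%N -> (i <= w)%N -> (w <= 3)%N -> (c <= k)%N ->
  (k <= c)%N /\ (w <= i)%N.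
Proof. lia. Qed.

Lemma dimVV (K : fieldType) (V : vectType K) : \dim {: (V * V)%type} = (dim V + dim V)%N.
Proof. by rewrite dimvf. Qed.

Theorem lemma4p2 (K : fieldType) (U V : vectType K)
  (S : {vspace 'Hom(U, V)}) (F : 'Hom(U, V) -> V)
  (hcodim : ((\dim {:'Hom(U, V)} - \dim S) + 3 <= 2 * \dim {:V})%N)
  (hadd : additive_on S F) (hrc : range_compatible S F)
  (y1 y2 y3 : V) (hfree : free [:: y1; y2; y3])
  (h1 : local_mod S F y1) (h2 : local_mod S F y2) (h3 : local_mod S F y3) :
  local_map S F.
Proof.
case: h1 => x1 h1; case: h2 => x2 h2; case: h3 => x3 h3.
pose z := x2 - x1; pose w := x3 - x1.
have dec : forall s, s \in S -> exists a b c,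
    [/\ F s - s x1 = a *: y1, F s - s x2 = b *: y2, F s - s x3 = c *: y3,
        s z = a *: y1 + (- b) *: y2 + 0 *: y3 &
        s w = a *: y1 + 0 *: y2 + (- c) *: y3].
  move=> s sS.
  case/vlineP: (h1 s sS) => a ea; case/vlineP: (h2 s sS) => b eb;
    case/vlineP: (h3 s sS) => c ec.
  exists a, b, c; split => //.
    rewrite scale0r addr0 scaleNr -ea -eb /z linearB /=.
    by rewrite opprB [RHS]addrC addrA subrK.
  rewrite scale0r addr0 scaleNr -ea -ec /w linearB /=.
  by rewrite opprB [RHS]addrC addrA subrK.
have [fzw | nfzw] := boolP (free [:: z; w]); last first.
  move: nfzw; rewrite free_cons seq1_free negb_and !negbK span_seq1.
  case/orP => [/vlineP [k ezk] | /eqP w0].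
    exists x2 => s sS; have [a [b [c [_ eb _ ez ew]]]] := dec s sS.
    have : s z = (k * a) *: y1 + 0 *: y2 + (k * - c) *: y3.
      by rewrite ezk linearZ /= ew !scalerDr !scalerA mulr0.
    rewrite ez => /(free3' hfree) [_ hb _].
    move/eqP: hb; rewrite oppr_eq0 => /eqP hb0.
    by apply/eqP; rewrite -subr_eq0 eb hb0 scale0r.
  exists x3 => s sS; have [a [b [c [_ _ ec ez ew]]]] := dec s sS.
  have : 0 *: y1 + 0 *: y2 + 0 *: y3 = a *: y1 + 0 *: y2 + (- c) *: y3.
    by rewrite -ew w0 linear0 !scale0r !addr0.
  move/(free3' hfree) => [_ _ hc].
  move/eqP: hc; rewrite eq_sym oppr_eq0 => /eqP hc0.
  by apply/eqP; rewrite -subr_eq0 ec hc0 scale0r.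
exfalso.
pose X := [tuple z; w].
pose Ph := linfun (@Phi K U V z w) : 'Hom('Hom(U, V), (V * V)%type).
have PhE : forall s, Ph s = (s z, s w) by move=> s; rewrite lfunE.
pose W : {vspace (V * V)%type} := <<[:: (y1, y1); (y2, 0%R); (0%R, y3)]>>%VS.
have PS : (Ph @: S <= W)%VS.
  apply/subvP => p /memv_imgP [s sS ->]; rewrite PhE.
  have [a [b [c [_ _ _ ez ew]]]] := dec s sS.
  have -> : (s z, s w) = a *: (y1, y1) + (- b) *: (y2, 0 : V) + (- c) *: (0 : V, y3).
    by rewrite ez ew; apply: (@f_equal2 _ _ _ pair); rewrite /= ?scaler0 ?scale0r ?addr0 ?add0r.
  by apply: rpredD; [apply: rpredD|]; apply: rpredZ; apply: memv_span;
    rewrite !inE eqxx ?orbT.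
have surj : (fullv <= limg Ph)%VS.
  apply/subvP => -[v1 v2] _; apply/memv_imgP.
  exists (linfun (@mkf K U V X v1 v2)); first exact: memvf.
  by rewrite PhE !lfunE /= mkf_z // mkf_w.
have dA := limg_ker_dim Ph fullv; rewrite capfv in dA.
have dS := limg_ker_dim Ph S.
have dL1 := dimvS surj; have dL2 := dimvS (subvf (limg Ph)).
rewrite dimVV in dL1 dL2.
have dW : (\dim W <= 3)%N := dim_span _.
have dPS := dimvS PS.
have dcap := dimvS (capvSr S (lker Ph)).
have dSf := dimvS (subvf S).
rewrite [\dim {:V}]dimvf in hcodim.
have hc : (dim 'Hom(U, V) - \dim S + 3 <= 2 * dim V)%N.
  by move: hcodim; rewrite dimvf.
have dA' : (\dim (lker Ph) + \dim (limg Ph) = dim 'Hom(U, V))%N.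
  by rewrite dA dimvf.
have [e1 e2] := @arith _ _ _ _ _ _ _ _ hc dA' dS dL1 dPS dW dcap.
have kerS : (lker Ph <= S)%VS.
  have /eqP <- : (S :&: lker Ph == lker Ph)%VS by rewrite eqEdim capvSr e1.
  exact: capvSl.
have PSW : (Ph @: S = W)%VS by apply/eqP; rewrite eqEdim PS e2.
pose s0 := linfun (@mkf K U V X (y1 - y2) (y1 - y3)).
have : (y1 - y2, y1 - y3) \in W.
  have -> : (y1 - y2, y1 - y3) = (y1, y1) - (y2, 0%R) - (0%R, y3).
    by apply: (@f_equal2 _ _ _ pair); rewrite /= ?subr0 ?sub0r.
  by apply: rpredB; [apply: rpredB|]; apply: memv_span; rewrite !inE eqxx ?orbT.
rewrite -PSW => /memv_imgP [s sS es].
have s0S : s0 \in S.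
  have : s0 - s \in lker Ph.
    by rewrite memv_ker linearB /= -es PhE !lfunE /= mkf_z // mkf_w // subrr.
  move/(subvP kerS) => h.
  by rewrite -(subrK s s0) rpredD.
have [a [b [c [ea _ _ ez _]]]] := dec s0 s0S.
have : 1 *: y1 + (-1) *: y2 + 0 *: y3 = a *: y1 + - b *: y2 + 0 *: y3.
  by rewrite -ez lfunE /= mkf_z // scale1r scale0r addr0 scaleN1r.
case/(free3' hfree) => a1 _ _.
have : y1 \in limg s0.
  have : F s0 - s0 x1 \in limg s0 by rewrite rpredB ?hrc // memv_img ?memvf.
  by rewrite ea -a1 scale1r.
case/memv_imgP => u _; rewrite lfunE /= /mkf => eu.
have : 1 *: y1 + 0 *: y2 + 0 *: y3 =
    (coord X (@Ordinal 2 0 isT) u + coord X (@Ordinal 2 1 isT) u) *: y1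
    + (- coord X (@Ordinal 2 0 isT) u) *: y2 + (- coord X (@Ordinal 2 1 isT) u) *: y3.
  rewrite scale1r !scale0r !addr0 {1}eu !scalerBr scalerDl !scaleNr.
  by rewrite addrACA addrA.
case/(free3' hfree) => c01 h0 h1'.
move/eqP: h0; rewrite eq_sym oppr_eq0 => /eqP h0.
move/eqP: h1'; rewrite eq_sym oppr_eq0 => /eqP h1'.
by move: c01; rewrite h0 h1' addr0 => /eqP; rewrite oner_eq0.
Qed.
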